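(* Let $q_1,\dots,q_5\in\widehat{\mathbb H}$ be five distinct points not lying on a single 2-sphere or 2-plane. Then any fractional linear transformation $T$ of $\widehat{\mathbb H}$ is uniquely determined by its values $T(q_n)$, $n=1,\dots,5$; i.e., if $T,T'$ are fractional linear transformations with $T(q_n)=T'(q_n)$ for $n=1,\dots,5$, then $T=T'$.
   Context: $\mathbb H$ denotes the quaternions (identified with $\mathbb R^4$), $\widehat{\mathbb H}=\mathbb H\cup\{\infty\}$. A fractional linear transformation of $\widehat{\mathbb H}$ is a map $q\mapsto(aq+b)(cq+d)^{-1}$ with $\begin{pmatrix}a&b\\c&d\end{pmatrix}\in GL(2,\mathbb H)$ invertible. *)

(* Defs.v *)
From HB Require Import structures.
From mathcomp Require Import all_boot all_order all_algebra.
From mathcomp Require Import reals.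
Set Implicit Arguments. Unset Strict Implicit. Unset Printing Implicit Defensive.
Import Order.TTheory GRing.Theory Num.Theory.
Local Open Scope ring_scope.

Section Quat.
Variable R : realType.

Record quat := Quat { qr : R; qi : R; qj : R; qk : R }.

Definition qzero : quat := Quat 0 0 0 0.
Definition qone  : quat := Quat 1 0 0 0.

Definition qadd (x y : quat) : quat :=
  Quat (qr x + qr y) (qi x + qi y) (qj x + qj y) (qk x + qk y).
Definition qopp (x : quat) : quat := Quat (- qr x) (- qi x) (- qj x) (- qk x).
Definition qsub (x y : quat) : quat := qadd x (qopp y).
Definition qscale (s : R) (x : quat) : quat :=
  Quat (s * qr x) (s * qi x) (s * qj x) (s * qk x).

Definition qmul (x y : quat) : quat :=
  Quat (qr x * qr y - qi x * qi y - qj x * qj y - qk x * qk y)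
       (qr x * qi y + qi x * qr y + qj x * qk y - qk x * qj y)
       (qr x * qj y - qi x * qk y + qj x * qr y + qk x * qi y)
       (qr x * qk y + qi x * qj y - qj x * qi y + qk x * qr y).

Definition qconj (x : quat) : quat := Quat (qr x) (- qi x) (- qj x) (- qk x).

Definition qdot (x y : quat) : R :=
  qr x * qr y + qi x * qi y + qj x * qj y + qk x * qk y.
Definition qnorm2 (x : quat) : R := qdot x x.

(** Inverse x^{-1} = conj x / |x|^2 (only used for x <> 0). *)
Definition qinv (x : quat) : quat := qscale (qnorm2 x)^-1 (qconj x).

Definition qeqb (x y : quat) : bool :=
  [&& qr x == qr y, qi x == qi y, qj x == qj y & qk x == qk y].
Definition qis0 (x : quat) : bool := qeqb x qzero.

(** The extended quaternions  H^ = H ∪ {∞}:  None is ∞. *)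
Definition Hhat := option quat.

Definition GL2H (a b c d : quat) : Prop :=
  exists a' b' c' d' : quat,
    [/\ qadd (qmul a a') (qmul b c') = qone, qadd (qmul a b') (qmul b d') = qzero,
        qadd (qmul c a') (qmul d c') = qzero & qadd (qmul c b') (qmul d d') = qone]
    /\
    [/\ qadd (qmul a' a) (qmul b' c) = qone, qadd (qmul a' b) (qmul b' d) = qzero,
        qadd (qmul c' a) (qmul d' c) = qzero & qadd (qmul c' b) (qmul d' d) = qone].

Definition flt (a b c d : quat) (x : Hhat) : Hhat :=
  match x with
  | Some q =>
      let den := qadd (qmul c q) d in
      if qis0 den then None else Some (qmul (qadd (qmul a q) b) (qinv den))
  | None => if qis0 c then None else Some (qmul a (qinv c))
  end.

(** A 2-sphere in H = R^4: the points x with |x - c| = r lying in the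
    3-dimensional affine subspace through c orthogonal to n (n <> 0, r > 0). *)
Definition on_2sphere (c n : quat) (r : R) (x : quat) : Prop :=
  qnorm2 (qsub x c) = r ^+ 2 /\ qdot (qsub x c) n = 0.

Definition lin_indep2 (u v : quat) : Prop :=
  forall s t : R, qadd (qscale s u) (qscale t v) = qzero -> s = 0 /\ t = 0.
Definition on_2plane (p u v : quat) (x : quat) : Prop :=
  exists s t : R, x = qadd p (qadd (qscale s u) (qscale t v)).

(** The points pts lie on a single 2-sphere (all finite) or on a single
    2-plane of H^ (a 2-plane of H together with ∞). *)
Definition on_common_2sphere_or_2plane (I : Type) (pts : I -> Hhat) : Prop :=
  (exists (c n : quat) (r : R), 0 < r /\ n <> qzero /\
     forall i, exists x, pts i = Some x /\ on_2sphere c n r x)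
  \/
  (exists p u v : quat, lin_indep2 u v /\
     forall i, pts i = None \/ exists x, pts i = Some x /\ on_2plane p u v x).

End Quat.

(* Main.v *)
Require Import Defs.
From mathcomp Require Import all_boot all_order all_algebra.
From mathcomp Require Import reals.
From HB Require Import structures.
From mathcomp Require Import ring lra.
Set Implicit Arguments. Unset Strict Implicit. Unset Printing Implicit Defensive.
Import Order.TTheory GRing.Theory Num.Theory.
Local Open Scope ring_scope.

Section QR.
Variable R : realType.
Local Notation H := (quat R).

Definition q2t (x : H) := (qr x, qi x, qj x, qk x).
Definition t2q (t : R * R * R * R) : H := let: (a, b, c, d) := t in Quat a b c d.
Lemma q2tK : cancel q2t t2q. Proof. by case. Qed.
HB.instance Definition _ := Choice.copy H (can_type q2tK).

Lemma qext (x y : H) : qr x = qr y -> qi x = qi y -> qj x = qj y -> qk x = qk y -> x = y.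
Proof. by case: x => ????; case: y => ???? /= -> -> -> ->. Qed.

Ltac qring := apply: qext => /=; ring.

Lemma qaddA : associative (@qadd R). Proof. move=> ???; qring. Qed.
Lemma qaddC : commutative (@qadd R). Proof. move=> ??; qring. Qed.
Lemma qadd0 : left_id (qzero R) (@qadd R). Proof. move=> ?; qring. Qed.
Lemma qaddN : left_inverse (qzero R) (@qopp R) (@qadd R). Proof. move=> ?; qring. Qed.
Lemma qmulA : associative (@qmul R). Proof. move=> ???; qring. Qed.
Lemma qmul1 : left_id (qone R) (@qmul R). Proof. move=> ?; qring. Qed.
Lemma qmulr1 : right_id (qone R) (@qmul R). Proof. move=> ?; qring. Qed.
Lemma qmulDl : left_distributive (@qmul R) (@qadd R). Proof. move=> ???; qring. Qed.
Lemma qmulDr : right_distributive (@qmul R) (@qadd R). Proof. move=> ???; qring. Qed.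
Lemma qone0 : qone R != qzero R.
Proof. apply/negP => /eqP /(f_equal (@qr R)) /= /eqP; by rewrite oner_eq0. Qed.

HB.instance Definition _ := GRing.isNzRing.Build H qaddA qaddC qadd0 qaddN
  qmulA qmul1 qmulr1 qmulDl qmulDr qone0.

Lemma sq4_eq0 (a b c d : R) : a * a + b * b + c * c + d * d = 0 -> [/\ a = 0, b = 0, c = 0 & d = 0].
Proof. move=> E; split; nra. Qed.

Lemma qnorm2_eq0 (x : H) : (qnorm2 x == 0) = (x == 0).
Proof.
apply/idP/idP; last by move/eqP->; rewrite /qnorm2 /qdot /= !mulr0 !addr0.
case: x => a b c d; rewrite /qnorm2 /qdot /= => /eqP /sq4_eq0 [-> -> -> ->] //.
Qed.

Lemma qnorm2_ge0 (x : H) : 0 <= qnorm2 x.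
Proof. case: x => a b c d; rewrite /qnorm2 /qdot /=; nra. Qed.

Lemma qnorm2_gt0 (x : H) : x != 0 -> 0 < qnorm2 x.
Proof. by move=> nx; rewrite lt_def qnorm2_eq0 nx qnorm2_ge0. Qed.

Lemma qmulV (x : H) : x != 0 -> qmul (qinv x) x = qone R.
Proof.
rewrite -qnorm2_eq0; case: x => a b c d; rewrite /qnorm2 /qdot /= => nz.
apply: qext; rewrite /= /qnorm2 /qdot /=; field; exact: nz.
Qed.
Lemma qmulVr (x : H) : x != 0 -> qmul x (qinv x) = qone R.
Proof.
rewrite -qnorm2_eq0; case: x => a b c d; rewrite /qnorm2 /qdot /= => nz.
apply: qext; rewrite /= /qnorm2 /qdot /=; field; exact: nz.
Qed.

Definition qunit : pred H := fun x => x != 0.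
Lemma qmulVr_sub : {in qunit, left_inverse 1 (@qinv R) *%R}.
Proof. move=> x; exact: qmulV. Qed.
Lemma qdivrr_sub : {in qunit, right_inverse 1 (@qinv R) *%R}.
Proof. move=> x; exact: qmulVr. Qed.
Lemma qunitrP (x y : H) : y * x = 1 /\ x * y = 1 -> qunit x.
Proof.
case=> _ h; apply/negP => /eqP x0; move: h; rewrite x0 mul0r => /eqP.
by rewrite eq_sym oner_eq0.
Qed.
Lemma qinv_out : {in [predC qunit], (@qinv R) =1 id}.
Proof.
move=> x; rewrite inE /qunit negbK => /eqP ->.
by apply: qext => /=; rewrite !(invr0, mul0r, mulr0, oppr0).
Qed.
HB.instance Definition _ := GRing.NzRing_hasMulInverse.Build H qmulVr_sub qdivrr_sub qunitrP qinv_out.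

Lemma qunitE (x : H) : (x \is a GRing.unit) = (x != 0). Proof. by []. Qed.
End QR.


Section QC.
Variable R : realType.
Local Notation H := (quat R).
Ltac qring := apply: qext => /=; ring.

Definition rq (s : R) : H := Quat s 0 0 0.
Definition qreal (x : H) := [/\ qi x = 0, qj x = 0 & qk x = 0].

Lemma qE (x y : H) : [/\ qmul x y = x * y, qadd x y = x + y, qsub x y = x - y & qopp x = - x].
Proof. by []. Qed.
Lemma qinvE (x : H) : qinv x = x^-1. Proof. by []. Qed.
Lemma qzeroE : qzero R = 0. Proof. by []. Qed.
Lemma qoneE : qone R = 1. Proof. by []. Qed.
Lemma qscaleE s (x : H) : qscale s x = rq s * x. Proof. qring. Qed.
Lemma rq_central s (x : H) : rq s * x = x * rq s. Proof. qring. Qed.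
Lemma rqD s t : rq (s + t) = rq s + rq t. Proof. qring. Qed.
Lemma rqM s t : rq (s * t) = rq s * rq t. Proof. qring. Qed.
Lemma rqN s : rq (- s) = - rq s. Proof. qring. Qed.
Lemma rq0 : rq 0 = 0. Proof. qring. Qed.
Lemma rq1 : rq 1 = 1. Proof. qring. Qed.
Lemma rq_eq0 s : (rq s == 0) = (s == 0).
Proof. apply/eqP/eqP => [/(f_equal (@qr R))//|->]; exact: rq0. Qed.
Lemma qreal_rq (x : H) : qreal x -> x = rq (qr x).
Proof. case: x => a b c d [/= -> -> ->]; by []. Qed.
Lemma qis0E (x : H) : qis0 x = (x == 0).
Proof.
apply/idP/idP.
  by case/and4P => /eqP ? /eqP ? /eqP ? /eqP ?; apply/eqP; apply: qext.
by move/eqP->; rewrite /qis0 /qeqb /= !eqxx.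
Qed.

Lemma cent (d z : H) : ~ qreal d -> z * d = d * z -> exists s t, z = rq s + rq t * d.
Proof.
case: d => d0 d1 d2 d3; case: z => z0 z1 z2 z3 nr E.
have E1 := f_equal (@qi R) E; have E2 := f_equal (@qj R) E; have E3 := f_equal (@qk R) E.
move: E1 E2 E3 => /= E1 E2 E3.
have nz : d1 * d1 + d2 * d2 + d3 * d3 != 0.
  apply/negP => /eqP h; apply: nr; rewrite /qreal /=; split; nra.
set t := (z1 * d1 + z2 * d2 + z3 * d3) / (d1 * d1 + d2 * d2 + d3 * d3).
exists (z0 - t * d0), t; apply: qext => /=.
- ring.
  all: have tn : t * (d1 * d1 + d2 * d2 + d3 * d3) = z1 * d1 + z2 * d2 + z3 * d3 by rewrite /t mulfVK.
  all: apply: (mulIf nz).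
  all: have F1 : z2 * d3 - z3 * d2 = 0 by lra.
  all: have F2 : z3 * d1 - z1 * d3 = 0 by lra.
  all: have F3 : z1 * d2 - z2 * d1 = 0 by lra.
- apply/eqP; rewrite -subr_eq0; apply/eqP.
  transitivity (d2 * (z1*d2 - z2*d1) - d3*(z3*d1 - z1*d3) + d1 * (z1 * d1 + z2 * d2 + z3 * d3 - t * (d1 * d1 + d2 * d2 + d3 * d3))); first ring.
  by rewrite F3 F2 tn subrr; ring.
- apply/eqP; rewrite -subr_eq0; apply/eqP.
  transitivity (d3 * (z2*d3 - z3*d2) - d1*(z1*d2 - z2*d1) + d2 * (z1 * d1 + z2 * d2 + z3 * d3 - t * (d1 * d1 + d2 * d2 + d3 * d3))); first ring.
  by rewrite F1 F3 tn subrr; ring.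
- apply/eqP; rewrite -subr_eq0; apply/eqP.
  transitivity (d1 * (z3*d1 - z1*d3) - d2*(z2*d3 - z3*d2) + d3 * (z1 * d1 + z2 * d2 + z3 * d3 - t * (d1 * d1 + d2 * d2 + d3 * d3))); first ring.
  by rewrite F1 F2 tn subrr; ring.
Qed.

Definition qI : H := Quat 0 1 0 0.
Lemma indep_1I : lin_indep2 1 qI.
Proof.
move=> s t; rewrite !qscaleE => /(congr1 (fun x : H => (qr x, qi x))) /=.
case=> h1 h2; split; lra.
Qed.

Lemma indepE (u v : H) : lin_indep2 u v <-> (forall s t, rq s * u + rq t * v = 0 -> s = 0 /\ t = 0).
Proof. by rewrite /lin_indep2; split=> h s t; move: (h s t); rewrite !qscaleE. Qed.

Lemma lemK (a d : H) : ~ (qreal d /\ a = d) ->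
  exists u v, lin_indep2 u v /\ forall w, w * a = d * w -> exists s t, w = rq s * u + rq t * v.
Proof.
move=> ndr.
case: (boolp.pselect (exists w1, w1 != 0 /\ w1 * a = d * w1)); last first.
  move=> nw; exists 1, qI; split; first exact: indep_1I.
  move=> w hw; exists 0, 0; rewrite rq0 !mul0r addr0.
  by case: (eqVneq w 0) => // nz; case: nw; exists w.
case=> w1 [nz h].
have u1 : w1 \is a GRing.unit by rewrite qunitE.
have nr : ~ qreal d.
  move=> rd; apply: ndr; split => //; rewrite (qreal_rq rd) in h *.
  have : w1 * a = w1 * rq (qr d) by rewrite h rq_central.
  by move/(congr1 (fun x => w1^-1 * x)); rewrite !mulKr.
exists w1, (d * w1); split.
  apply/indepE => s t; rewrite mulrA -mulrDl => /(congr1 (fun x => x * w1^-1)).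
  rewrite mulrK // mul0r => /(congr1 (fun x : H => (qr x, qi x, qj x, qk x))) /=.
  case: d nr {ndr h} => d0 d1 d2 d3 nr /=.
  case=> h0 h1 h2 h3.
  have t0 : t = 0.
    apply/eqP/negP => /negP tn; apply: nr; rewrite /qreal /=; split.
    + by apply/eqP; move: h1; rewrite !(mul0r, add0r, addr0, subr0) => /eqP; rewrite mulf_eq0 (negPf tn).
    + by apply/eqP; move: h2; rewrite !(mul0r, add0r, addr0, subr0) => /eqP; rewrite mulf_eq0 (negPf tn).
    + by apply/eqP; move: h3; rewrite !(mul0r, add0r, addr0, subr0) => /eqP; rewrite mulf_eq0 (negPf tn).
  split => //; move: h0; rewrite t0; lra.
move=> w hw.
have ha : a = w1^-1 * (d * w1) by rewrite -h mulKr.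
have zd : (w * w1^-1) * d = d * (w * w1^-1).
  have : w * a * w1^-1 = d * w * w1^-1 by rewrite hw.
  by rewrite ha !mulrA mulrK // => ->; rewrite !mulrA.
have [s [t zE]] := cent nr zd.
exists s, t; rewrite -[w](divrK u1) zE mulrDl mulrA //.
Qed.
End QC.


Section QD.
Variable R : realType.
Local Notation H := (quat R).
Ltac qring := apply: qext => /=; ring.
Ltac unq := rewrite /qnorm2 /qdot /=.

Lemma qmulE (x y : H) : qmul x y = x * y. Proof. by []. Qed.
Lemma qaddE (x y : H) : qadd x y = x + y. Proof. by []. Qed.
Lemma qsubE (x y : H) : qsub x y = x - y. Proof. by []. Qed.
Lemma qoppE (x : H) : qopp x = - x. Proof. by []. Qed.

Lemma qdotDl (x y z : H) : qdot (x + y) z = qdot x z + qdot y z. Proof. unq; ring. Qed.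
Lemma qdotBl (x y z : H) : qdot (x - y) z = qdot x z - qdot y z. Proof. unq; ring. Qed.
Lemma qdotZl s (x z : H) : qdot (rq s * x) z = s * qdot x z. Proof. unq; ring. Qed.
Lemma qdotC (x y : H) : qdot x y = qdot y x. Proof. unq; ring. Qed.
Lemma qdot_conj (x y : H) : qdot (qconj x) (qconj y) = qdot x y. Proof. unq; ring. Qed.
Lemma qnorm2_conj (x : H) : qnorm2 (qconj x) = qnorm2 x. Proof. unq; ring. Qed.
Lemma qnorm2N (x : H) : qnorm2 (- x) = qnorm2 x. Proof. unq; ring. Qed.
Lemma qconj_lin s t (x y : H) : qconj (rq s * x + rq t * y) = rq s * qconj x + rq t * qconj y.
Proof. qring. Qed.
Lemma qconjK (x : H) : qconj (qconj x) = x. Proof. qring. Qed.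
Lemma qinv_conj (x : H) : x^-1 = rq (qnorm2 x)^-1 * qconj x.
Proof. by rewrite -qinvE /qinv qscaleE. Qed.

Lemma qneq0 (x : H) : x != 0 -> qnorm2 x != 0.
Proof. by rewrite qnorm2_eq0. Qed.

Lemma indep_neq0 (u v : H) : lin_indep2 u v -> u != 0.
Proof.
move/indepE => h; apply/eqP => u0; have := h 1 0; rewrite u0 rq0 !mul0r mulr0 addr0.
by case=> // /eqP; rewrite oner_eq0.
Qed.

Definition gram2 (u v : H) := qnorm2 u * qnorm2 v - qdot u v ^+ 2.

Lemma gram2_gt0 (u v : H) : lin_indep2 u v -> 0 < gram2 u v.
Proof.
move=> hi; have nu := indep_neq0 hi.
have Nu := qnorm2_gt0 nu.
set w := rq (- qdot u v) * u + rq (qnorm2 u) * v.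
have nw : w != 0.
  apply/eqP => w0; have [_ ] := (iffLR (indepE u v) hi _ _ w0).
  by move/eqP; rewrite (negPf (qneq0 nu)).
have : qnorm2 w = qnorm2 u * gram2 u v by rewrite /w /gram2; unq; ring.
move=> e; have := qnorm2_gt0 nw; rewrite e; by rewrite pmulr_rgt0.
Qed.

Definition det3 (a0 a1 a2 b0 b1 b2 c0 c1 c2 : R) :=
  a0 * (b1 * c2 - b2 * c1) - a1 * (b0 * c2 - b2 * c0) + a2 * (b0 * c1 - b1 * c0).
Definition cr3 (p u v : H) : H :=
  Quat (det3 (qi p) (qj p) (qk p) (qi u) (qj u) (qk u) (qi v) (qj v) (qk v))
       (- det3 (qr p) (qj p) (qk p) (qr u) (qj u) (qk u) (qr v) (qj v) (qk v))
       (det3 (qr p) (qi p) (qk p) (qr u) (qi u) (qk u) (qr v) (qi v) (qk v))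
       (- det3 (qr p) (qi p) (qj p) (qr u) (qi u) (qj u) (qr v) (qi v) (qj v)).

Lemma cr3_orth (p u v : H) a b : qdot (p + rq a * u + rq b * v) (cr3 p u v) = 0.
Proof. rewrite /cr3 /det3; unq; ring. Qed.

Lemma cr3_norm (p u v : H) : qnorm2 (cr3 p u v) =
  qnorm2 p * (qnorm2 u * qnorm2 v - qdot u v ^+ 2)
  - qdot p u * (qdot p u * qnorm2 v - qdot u v * qdot p v)
  + qdot p v * (qdot p u * qdot u v - qnorm2 u * qdot p v).
Proof. rewrite /cr3 /det3; unq; ring. Qed.

Lemma cr3_orth0 (p u v : H) : qdot p (cr3 p u v) = 0.
Proof. rewrite /cr3 /det3; unq; ring. Qed.

Lemma qnorm2Z k (x : H) : qnorm2 (rq k * x) = k ^+ 2 * qnorm2 x. Proof. unq; ring. Qed.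

Lemma sph_id (z p : H) : qnorm2 z != 0 -> qnorm2 p != 0 ->
  qnorm2 (z^-1 - rq ((2 * qnorm2 p)^-1) * qconj p)
  = (qnorm2 z)^-1 - qdot z p / (qnorm2 z * qnorm2 p) + (4 * qnorm2 p)^-1.
Proof.
rewrite qinv_conj; case: z => z0 z1 z2 z3; case: p => p0 p1 p2 p3.
unq => h1 h2; field.
by rewrite h1 h2.
Qed.

Lemma inv_geom (z1 u v : H) (P : H -> Prop) : lin_indep2 u v ->
  (forall y, P y -> y != 0 -> exists s t, y^-1 = z1 + rq s * u + rq t * v) ->
  (exists c n r, 0 < r /\ n <> 0 /\ forall y, P y -> on_2sphere c n r y) \/
  (exists p u' v', lin_indep2 u' v' /\ forall y, P y -> on_2plane p u' v' y).
Proof.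
move=> hi hP.
have G0 := gram2_gt0 hi.
have Gn : gram2 u v != 0 by rewrite gt_eqF.
move: Gn; rewrite /gram2 => Gn.
pose al := (qdot z1 u * qnorm2 v - qdot z1 v * qdot u v) / (qnorm2 u * qnorm2 v - qdot u v ^+ 2).
pose be := (qdot z1 v * qnorm2 u - qdot z1 u * qdot u v) / (qnorm2 u * qnorm2 v - qdot u v ^+ 2).
pose p0 := z1 - rq al * u - rq be * v.
have pu : qdot p0 u = 0.
  rewrite /p0 !qdotBl !qdotZl (qdotC v u) /al /be.
  rewrite -/(qnorm2 u); field; exact: Gn.
have pv : qdot p0 v = 0.
  rewrite /p0 !qdotBl !qdotZl /al /be.
  rewrite -/(qnorm2 v); field; exact: Gn.
have hz1 : z1 = p0 + rq al * u + rq be * v by rewrite /p0; qring.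
have hz : forall y, P y -> y != 0 -> exists a b, y^-1 = p0 + rq a * u + rq b * v.
  move=> y Py ny; have [s [t e]] := hP y Py ny; exists (al + s), (be + t).
  by rewrite e hz1 !rqD; qring.
clearbody p0.
case: (eqVneq p0 0) => [p00|pn0].
  right; exists 0, (qconj u), (qconj v); split.
    apply/indepE => s t; rewrite -qconj_lin => h; apply: (iffLR (indepE u v) hi).
    by rewrite -[rq s * u + _]qconjK h; qring.
  move=> y Py; rewrite /on_2plane.
  case: (eqVneq y 0) => [->|ny].
    by exists 0, 0; rewrite !qscaleE rq0 !mul0r; qring.
  have [a [b e]] := hz y Py ny.
  rewrite p00 add0r in e.
  have : y = (y^-1)^-1 by rewrite invrK.
  rewrite e qinv_conj qconj_lin => ->.
  exists ((qnorm2 (rq a * u + rq b * v))^-1 * a), ((qnorm2 (rq a * u + rq b * v))^-1 * b).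
  by rewrite !qscaleE !qaddE add0r !rqM -!mulrA -mulrDr.
left.
have Np := qnorm2_gt0 pn0.
pose X := cr3 p0 u v.
have NX : qnorm2 X = qnorm2 p0 * (qnorm2 u * qnorm2 v - qdot u v ^+ 2).
  by rewrite /X cr3_norm pu pv; ring.
have Xn : X != 0.
  by rewrite -qnorm2_eq0 NX mulf_eq0 negb_or Gn (qneq0 pn0).
pose c := rq ((2 * qnorm2 p0)^-1) * qconj p0.
have Nc : qnorm2 c = (4 * qnorm2 p0)^-1.
  rewrite /c qnorm2Z qnorm2_conj; field; by rewrite (qneq0 pn0).
exists c, (qconj X), (Num.sqrt (qnorm2 c)); split; last split.
- by rewrite sqrtr_gt0 Nc invr_gt0 mulr_gt0.
- have c0 : qconj 0 = 0 :> H by qring.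
  by move=> h; move: Xn; rewrite -[X]qconjK h c0 eqxx.
move=> y Py; rewrite /on_2sphere qsubE sqr_sqrtr ?qnorm2_ge0 //.
have cX : qdot c (qconj X) = 0 by rewrite /c qdotZl qdot_conj /X cr3_orth0 mulr0.
case: (eqVneq y 0) => [->|ny].
  have -> : 0 - c = rq (-1) * c by qring.
  by rewrite qnorm2Z qdotZl cX mulr0 expr2 mulrNN mulr1 mul1r.
have [a [b e]] := hz y Py ny.
have zn : y^-1 != 0 by rewrite invr_eq0.
have yE : y = (y^-1)^-1 by rewrite invrK.
rewrite yE; split.
  rewrite sph_id ?qneq0 // Nc e.
  have -> : qdot (p0 + rq a * u + rq b * v) p0 = qnorm2 p0.
    by rewrite !qdotDl !qdotZl (qdotC u) (qdotC v) pu pv !mulr0 !addr0.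
  rewrite -e; field; rewrite (qneq0 zn) (qneq0 pn0) //.
rewrite qdotBl cX subr0 qinv_conj qdotZl qdot_conj e cr3_orth mulr0 //.
Qed.
End QD.


Section QE.
Variable R : realType.
Local Notation H := (quat R).
Ltac qring := apply: qext => /=; ring.

Lemma core (q : 'I_5 -> Hhat R) (A B C D : H) :
  injective q -> ~ on_common_2sphere_or_2plane q ->
  (forall n, q n = None -> C = 0) ->
  (forall n x, q n = Some x -> A * x + B = x * (C * x + D)) ->
  B = 0 /\ C = 0 /\ exists l, A = rq l /\ D = rq l.
Proof.
move=> qinj hnc hN hS.
have [n0 [x0 qx0]] : exists n x, q n = Some x.
  case E0: (q ord0) => [x|]; first by exists ord0, x.
  case E1: (q (lift ord0 ord0)) => [x|]; first by exists (lift ord0 ord0), x.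
  by have := qinj _ _ (etrans E0 (esym E1)).
have E0 := hS _ _ qx0.
case: (eqVneq C 0) => [C0|Cn].
  have hS' : forall n x, q n = Some x -> (x - x0) * D = A * (x - x0).
    move=> n x /hS Ex; move: Ex E0; rewrite C0 !mul0r !add0r => Ex E0.
    by rewrite mulrBl -Ex -E0 mulrBr opprD addrACA subrr addr0.
  case: (boolp.pselect (qreal D /\ A = D)) => [[rD AD]|nd].
    split; last split => //; last by exists (qr D); rewrite AD -(qreal_rq rD).
    move: E0; rewrite C0 mul0r add0r AD (qreal_rq rD) rq_central.
    by move/(congr1 (fun z => z - x0 * rq (qr D))); rewrite addrAC subrr add0r.
  have nd' : ~ (qreal A /\ D = A) by case=> rA DA; apply: nd; rewrite DA.
  have [u [v [hi hw]]] := lemK nd'.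
  exfalso; apply: hnc; right; exists x0, u, v; split => // i.
  case E: (q i) => [x|]; [right; exists x; split => // | by left].
  have [s [t e]] := hw _ (hS' _ _ E).
  by exists s, t; rewrite !qscaleE !qaddE -e addrC subrK.
exfalso.
have hF : forall n, exists x, q n = Some x.
  move=> n; case E: (q n) => [x|]; [by exists x | by case/eqP: Cn; exact: hN E].
have key : forall x, A * x + B = x * (C * x + D) ->
    (x - x0) * C * (x - x0) = (A - x0 * C) * (x - x0) - (x - x0) * (C * x0 + D).
  move=> x Ex.
  have h0 : (x * (C * x + D) - (A * x + B)) - (x0 * (C * x0 + D) - (A * x0 + B)) = 0.
    by rewrite -Ex -E0; qring.
  apply/eqP; rewrite -subr_eq0; apply/eqP; apply: (etrans _ h0); qring.
pose A' := A - x0 * C; pose D' := C * x0 + D.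
have {}key : forall x, A * x + B = x * (C * x + D) ->
    (x - x0) * C * (x - x0) = A' * (x - x0) - (x - x0) * D' by exact: key.
clearbody A' D'.
have key2 : forall x, A * x + B = x * (C * x + D) -> x - x0 != 0 ->
    (x - x0)^-1 * A' - D' * (x - x0)^-1 = C.
  move=> x Ex ny; have := congr1 (fun z => (x - x0)^-1 * z * (x - x0)^-1) (key x Ex).
  have uy : (x - x0) \is a GRing.unit by rewrite qunitE.
  rewrite /= !mulrA (mulVr uy) mul1r mulrK // => ->.
  rewrite mulrBr mulrBl mulKr // !mulrA mulrK //.
case: (boolp.pselect (exists n x, q n = Some x /\ x - x0 != 0)); last first.
  move=> nex; apply: hnc; right; exists x0, 1, (qI R); split; first exact: indep_1I.
  move=> i; right; have [x Ex] := hF i; exists x; split => //.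
  have -> : x = x0.
    apply/eqP; rewrite -subr_eq0; apply/negP => /negP h; apply: nex; by exists i, x.
  by exists 0, 0; rewrite !qscaleE rq0 !mul0r !qaddE !addr0.
case=> n1 [x1 [E1 ny1]].
have hz1 := key2 _ (hS _ _ E1) ny1.
case: (boolp.pselect (qreal D' /\ A' = D')) => [[rD AD]|nd].
  move: hz1; rewrite AD (qreal_rq rD) rq_central subrr => C0.
  by move: Cn; rewrite -C0 eqxx.
have [u [v [hi hw]]] := lemK nd.
pose P (y : H) := exists n, q n = Some (x0 + y).
have hP : forall y, P y -> y != 0 -> exists s t, y^-1 = (x1 - x0)^-1 + rq s * u + rq t * v.
  move=> y [n En] ny.
  have ny' : x0 + y - x0 != 0 by rewrite (addrC x0) addrK.
  have hz := key2 _ (hS _ _ En) ny'.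
  move: hz; rewrite (addrC x0) addrK => hz.
  have hw' : (y^-1 - (x1 - x0)^-1) * A' = D' * (y^-1 - (x1 - x0)^-1).
    apply/eqP; rewrite -subr_eq0; apply/eqP.
    transitivity ((y^-1 * A' - D' * y^-1) - ((x1 - x0)^-1 * A' - D' * (x1 - x0)^-1)); first qring.
    by rewrite hz hz1 subrr.
  have [s [t e]] := hw _ hw'.
  by exists s, t; rewrite -addrA -e addrC subrK.
case: (inv_geom hi hP) => [[c [nn [r [r0 [nn0 hs]]]]] | [p [u' [v' [hi' hp]]]]]; apply: hnc.
  left; exists (x0 + c), nn, r; split => //; split => // i.
  have [x Ex] := hF i; exists x; split => //.
  have Py : P (x - x0) by exists i; rewrite addrC subrK.
  have := hs _ Py; rewrite /on_2sphere !qsubE.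
  by rewrite opprD addrA.
right; exists (x0 + p), u', v'; split => // i.
have [x Ex] := hF i; right; exists x; split => //.
have Py : P (x - x0) by exists i; rewrite addrC subrK.
have [s [t e]] := hp _ Py; exists s, t.
move: e; rewrite !qaddE => e.
by rewrite -addrA -e addrC subrK.
Qed.
End QE.


Section QF.
Variable R : realType.
Local Notation H := (quat R).
Ltac qring := apply: qext => /=; ring.

Lemma fltE (a b c d : H) x : flt a b c d x =
  match x with
  | Some q => if (c * q + d == 0) then None else Some ((a * q + b) * (c * q + d)^-1)
  | None => if c == 0 then None else Some (a * c^-1)
  end.
Proof. by case: x => [y|] /=; rewrite qis0E. Qed.

Lemma unit_of (x y : H) : y * x = 1 -> x \is a GRing.unit.
Proof.
move=> h; rewrite qunitE; apply/eqP => x0; move: h; rewrite x0 mulr0 => /eqP.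
by rewrite eq_sym oner_eq0.
Qed.

Lemma linv (x y : H) : y * x = 1 -> y = x^-1.
Proof. move=> h; have u := unit_of h; by rewrite -[y](mulrK u) h mul1r. Qed.

Lemma fix_gen (e f g h x P Q P' Q' : H) : e * P + f * Q = x -> g * P + h * Q = 1 ->
  (if Q == 0 then None else Some (P * Q^-1)) = (if Q' == 0 then None else Some (P' * Q'^-1)) ->
  e * P' + f * Q' = x * (g * P' + h * Q').
Proof.
move=> hx h1.
case: (eqVneq Q 0) => [Q0|Qn]; case: (eqVneq Q' 0) => [Q'0|Q'n] // E.
  move: hx h1; rewrite Q0 Q'0 !mulr0 !addr0 => hx h1.
  have uP := unit_of h1; rewrite (linv h1) -hx -(mulrK uP e) .
  by rewrite !mulrK // mulrA mulrK.
move/Some_inj: E => E.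
have uQ : Q \is a GRing.unit by rewrite qunitE.
have uQ' : Q' \is a GRing.unit by rewrite qunitE.
pose w := P * Q^-1.
have hP : P = w * Q by rewrite /w divrK.
have hP' : P' = w * Q' by rewrite /w E divrK.
have ex : (e * w + f) * Q = x by rewrite mulrDl -mulrA -hP.
have eg : (g * w + h) * Q = 1 by rewrite mulrDl -mulrA -hP.
rewrite hP'.
have -> : e * (w * Q') + f * Q' = (e * w + f) * Q' by rewrite mulrDl mulrA.
have -> : g * (w * Q') + h * Q' = (g * w + h) * Q' by rewrite mulrDl mulrA.
have -> : e * w + f = x * Q^-1 by rewrite -ex mulrK.
have -> : g * w + h = Q^-1 by rewrite -(linv eg).
by rewrite mulrA.
Qed.

Lemma fix_fin (a b c d a' b' c' d' e f g h x : H) :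
  e * a + f * c = 1 -> e * b + f * d = 0 -> g * a + h * c = 0 -> g * b + h * d = 1 ->
  flt a b c d (Some x) = flt a' b' c' d' (Some x) ->
  (e * a' + f * c') * x + (e * b' + f * d') = x * ((g * a' + h * c') * x + (g * b' + h * d')).
Proof.
move=> n1 n2 n3 n4; rewrite !fltE.
have hx : e * (a * x + b) + f * (c * x + d) = x.
  transitivity ((e * a + f * c) * x + (e * b + f * d)); first qring.
  by rewrite n1 n2 mul1r addr0.
have h1 : g * (a * x + b) + h * (c * x + d) = 1.
  transitivity ((g * a + h * c) * x + (g * b + h * d)); first qring.
  by rewrite n3 n4 mul0r add0r.
have -> : (e * a' + f * c') * x + (e * b' + f * d') = e * (a' * x + b') + f * (c' * x + d') by qring.
have -> : (g * a' + h * c') * x + (g * b' + h * d') = g * (a' * x + b') + h * (c' * x + d') by qring.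
move=> E; apply: (fix_gen hx h1 E).
Qed.
Lemma fix_inf (a b c d a' b' c' d' e f g h : H) :
  e * a + f * c = 1 -> g * a + h * c = 0 ->
  flt a b c d None = flt a' b' c' d' None -> g * a' + h * c' = 0.
Proof.
move=> n1 n3; rewrite !fltE.
case: (eqVneq c 0) => [c0|cn]; case: (eqVneq c' 0) => [c'0|c'n] // E.
  rewrite c'0.
  move: n1 n3; rewrite c0 !mulr0 !addr0 => n1 n3.
  have ua := unit_of n1.
  by rewrite -(mulrK ua g) n3 !(mul0r, mulr0, addr0).
move/Some_inj: E => E.
have uc : c \is a GRing.unit by rewrite qunitE.
have uc' : c' \is a GRing.unit by rewrite qunitE.
pose w := a * c^-1.
have ha : a = w * c by rewrite /w divrK.
have ha' : a' = w * c' by rewrite /w E divrK.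
have : (g * w + h) * c = 0 by rewrite mulrDl -mulrA -ha.
move=> /(congr1 (fun z => z * c^-1)); rewrite mulrK // mul0r => gw.
by rewrite ha' mulrA -mulrDl gw mul0r.
Qed.

Lemma flt_scale (a b c d : H) l x : l != 0 ->
  flt (a * rq l) (b * rq l) (c * rq l) (d * rq l) x = flt a b c d x.
Proof.
move=> ln; have ul : rq l \is a GRing.unit by rewrite qunitE rq_eq0.
have z0 : forall y : H, (y * rq l == 0) = (y == 0).
  move=> y; apply/idP/idP => [/eqP h|/eqP->]; last by rewrite mul0r.
  by rewrite -(mulrK ul y) h mul0r.
rewrite !fltE; case: x => [y|].
  have -> : c * rq l * y + d * rq l = (c * y + d) * rq l.
    by rewrite mulrDl -!mulrA (rq_central l y).
  rewrite z0; case: ifP => // /negbT nz.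
  have uz : c * y + d \is a GRing.unit by rewrite qunitE.
  have -> : a * rq l * y + b * rq l = (a * y + b) * rq l.
    by rewrite mulrDl -!mulrA (rq_central l y).
  by rewrite invrM // mulrA mulrK.
rewrite z0; case: ifP => // /negbT nz.
have uc : c \is a GRing.unit by rewrite qunitE.
by rewrite invrM // mulrA mulrK.
Qed.
End QF.


Ltac qring := apply: qext => /=; ring.

Theorem mainTheorem4 (R : realType) (q : 'I_5 -> Hhat R) :
  injective q ->
  ~ on_common_2sphere_or_2plane q ->
  forall a b c d a' b' c' d' : quat R,
    GL2H a b c d -> GL2H a' b' c' d' ->
    (forall n : 'I_5, flt a b c d (q n) = flt a' b' c' d' (q n)) ->
    forall x : Hhat R, flt a b c d x = flt a' b' c' d' x.
Proof.
move=> qinj hnc a b c d a' b' c' d' hM hM' hq.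
case: hM => e [f [g [h [[m1 m2 m3 m4] [n1 n2 n3 n4]]]]].
move: m1 m2 m3 m4 n1 n2 n3 n4; rewrite !qaddE !qmulE !qoneE !qzeroE => m1 m2 m3 m4 n1 n2 n3 n4.
have hN : forall n, q n = None -> g * a' + h * c' = 0.
  by move=> n En; have := hq n; rewrite En; apply: fix_inf n1 n3.
have hS : forall n x, q n = Some x ->
   (e * a' + f * c') * x + (e * b' + f * d') = x * ((g * a' + h * c') * x + (g * b' + h * d')).
  by move=> n x En; have := hq n; rewrite En; apply: fix_fin n1 n2 n3 n4.
have [B0 [C0 [l [Al Dl]]]] := core qinj hnc hN hS.
have ea' : a' = a * (e * a' + f * c') + b * (g * a' + h * c').
  by transitivity ((a * e + b * g) * a' + (a * f + b * h) * c'); [rewrite m1 m2 mul1r mul0r addr0 | qring].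
have eb' : b' = a * (e * b' + f * d') + b * (g * b' + h * d').
  by transitivity ((a * e + b * g) * b' + (a * f + b * h) * d'); [rewrite m1 m2 mul1r mul0r addr0 | qring].
have ec' : c' = c * (e * a' + f * c') + d * (g * a' + h * c').
  by transitivity ((c * e + d * g) * a' + (c * f + d * h) * c'); [rewrite m3 m4 mul1r mul0r add0r | qring].
have ed' : d' = c * (e * b' + f * d') + d * (g * b' + h * d').
  by transitivity ((c * e + d * g) * b' + (c * f + d * h) * d'); [rewrite m3 m4 mul1r mul0r add0r | qring].
rewrite C0 Al B0 Dl !(mulr0, addr0, add0r) in ea' eb' ec' ed'.
have ln : l != 0.
  apply/eqP => l0; case: hM' => e' [f' [g' [h' [[p1 _ _ _] _]]]].
  move: p1; rewrite ea' eb' l0 rq0 !mulr0 => /(congr1 (@qr R)) /=.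
  by move/eqP; rewrite !(mulr0, mul0r, subrr, addr0) eq_sym oner_eq0.
by move=> x; rewrite ea' eb' ec' ed' flt_scale.
Qed.
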